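(* Let $d\ge2$, $\gamma^\mu\in\mathbb{S}^d$ with zero diagonal and $\gamma^\mu_{ij}>0$ for all $i\ne j$, and let $b^\mu_i(\mu)=\beta^\mu_i+\sum_jB^\mu_{ij}\mu^j$ with $(\beta^\mu,B^\mu,\gamma^\mu)$ an admissible simplex parameter set. Let $J\subseteq\{1,\dots,d\}$ be the set of indices $j$ for which $b^\mu_j=0$ on $\{\mu\in\Delta^d:\mu^j=0\}$, and $E=\{\mu\in\Delta^d:\mu^j>0\text{ for all }j\notin J\}$. Then there exists a function $\widetilde{\lambda}:E\to\mathbb{R}^{d-1}$ such that $\widetilde{b}^\mu=\widetilde{c}^\mu\widetilde{\lambda}(\mu)$ for all $\mu\in E$.
   Context: $\Delta^d$ is the unit simplex. For $\mu\in\Delta^d$, $c^\mu\in\mathbb{S}^d$ is given by $c^\mu_{ii}=\sum_{j\ne i}\gamma^\mu_{ij}\mu^i\mu^j$, $c^\mu_{ij}=-\gamma^\mu_{ij}\mu^i\mu^j$ ($i\ne j$); $\widetilde{c}^\mu$ is $c^\mu$ with the $d$-th row and column deleted and $\widetilde{b}^\mu$ is $b^\mu$ with the $d$-th entry deleted. An admissible simplex parameter set is $(\beta^\mu,B^\mu,\gamma^\mu)$ with $\gamma^\mu$ having nonnegative off-diagonal and zero diagonal entries, $(B^\mu)^\top\mathbf{1}+((\beta^\mu)^\top\mathbf{1})\mathbf{1}=0$, $\beta^\mu_i+B^\mu_{ij}\ge0$ for $i\ne j$. *)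

(* Defs.v *)
From HB Require Import structures.
From mathcomp Require Import all_boot all_order all_algebra.
Set Implicit Arguments. Unset Strict Implicit. Unset Printing Implicit Defensive.
Import Order.TTheory GRing.Theory Num.Theory.
Local Open Scope ring_scope.

Section Simplex.
Variables (R : realFieldType) (d : nat).

Definition in_simplex (mu : 'I_d -> R) : Prop :=
  (forall i, 0 <= mu i) /\ \sum_(i < d) mu i = 1.

Definition bvec (beta : 'cV[R]_d) (B : 'M[R]_d) (mu : 'I_d -> R) : 'cV[R]_d :=
  \col_i (beta i 0 + \sum_(j < d) B i j * mu j).

Definition cmat (gamma : 'M[R]_d) (mu : 'I_d -> R) : 'M[R]_d :=
  \matrix_(i, j) (if i == j then \sum_(k < d | k != i) gamma i k * mu i * mu k
                  else - (gamma i j * mu i * mu j)).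

Definition admissible (beta : 'cV[R]_d) (B gamma : 'M[R]_d) : Prop :=
  [/\ (forall i j, i != j -> 0 <= gamma i j),
      (forall i, gamma i i = 0),
      (forall j : 'I_d, \sum_(i < d) B i j + \sum_(i < d) beta i 0 = 0) &
      (forall i j, i != j -> 0 <= beta i 0 + B i j)].

Definition Jset (beta : 'cV[R]_d) (B : 'M[R]_d) (j : 'I_d) : Prop :=
  forall mu, in_simplex mu -> mu j = 0 -> bvec beta B mu j 0 = 0.

Definition Eset (beta : 'cV[R]_d) (B : 'M[R]_d) (mu : 'I_d -> R) : Prop :=
  in_simplex mu /\ (forall j, ~ Jset beta B j -> 0 < mu j).

Definition wd (i : 'I_d.-1) : 'I_d := widen_ord (leq_pred d) i.

Definition vtilde (v : 'cV[R]_d) : 'cV[R]_(d.-1) := \col_i v (wd i) 0.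
Definition mtilde (M : 'M[R]_d) : 'M[R]_(d.-1) := \matrix_(i, j) M (wd i) (wd j).

End Simplex.

(* Main.v *)
From Stdlib Require Import Classical.
Require Import Defs.
From mathcomp Require Import all_boot all_order all_algebra.
From mathcomp Require Import ring lra.
Import Order.TTheory GRing.Theory Num.Theory.
Local Open Scope ring_scope.

Lemma key (R : realFieldType) (T : finType) (w : T -> T -> R) (y : T -> R) :
 (forall i k, w i k = w k i) -> (forall i k, 0 <= w i k) ->
 \sum_i y i * \sum_k w i k * (y i - y k) = 0 ->
 forall i k, w i k * (y i - y k)^+2 = 0.
Proof.
move=> ws w0 h.
have hQ : \sum_i \sum_k w i k * y i * (y i - y k) = 0.
  rewrite -[RHS]h; apply: eq_bigr => i _; rewrite mulr_sumr; apply: eq_bigr => k _ /=; ring.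
have hQ' : \sum_i \sum_k w i k * y k * (y k - y i) = 0.
  rewrite exchange_big /= -[RHS]hQ; apply: eq_bigr => i _; apply: eq_bigr => k _.
  by rewrite ws.
have hS : \sum_i \sum_k w i k * (y i - y k)^+2 = 0.
  transitivity (\sum_i \sum_k w i k * y i * (y i - y k) + \sum_i \sum_k w i k * y k * (y k - y i)); last by rewrite hQ hQ' addr0.
  rewrite -big_split; apply: eq_bigr => i _; rewrite -big_split; apply: eq_bigr => k _ /=; ring.
move=> i k.
have hin : forall i, 0 <= \sum_k w i k * (y i - y k)^+2.
  by move=> j; apply: sumr_ge0 => l _; apply: mulr_ge0 => //; apply: sqr_ge0.
have := @psumr_eq0P _ _ xpredT _ (fun j _ => hin j) hS i isT.
move=> h2; apply: (@psumr_eq0P _ _ xpredT _ _ h2 k isT) => l _.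
by apply: mulr_ge0 => //; apply: sqr_ge0.
Qed.

Lemma main_n (R : realFieldType) (n : nat)
  (beta : 'cV[R]_n.+1) (B gamma : 'M[R]_n.+1)
  (hsym : gamma^T = gamma)
  (hdiag : forall i, gamma i i = 0)
  (hpos : forall i j, i != j -> 0 < gamma i j)
  (hadm : admissible beta B gamma) :
  exists lam : ('I_n.+1 -> R) -> 'cV[R]_(n.+1.-1),
    forall mu, Eset beta B mu ->
      vtilde (bvec beta B mu) = mtilde (cmat gamma mu) *m lam mu.
Proof.
case: hadm => _ _ hcol _.
pose bt mu := vtilde (bvec beta B mu).
pose C mu := mtilde (cmat gamma mu).
exists (fun mu => ((bt mu)^T *m pinvmx (C mu)^T)^T).
move=> mu [[mu0 mu1] E2].
have gs : forall i k, gamma i k = gamma k i.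
  by move=> i k; have := congr1 (fun M : 'M[R]_n.+1 => M k i) hsym; rewrite mxE.
have wdl : forall i : 'I_n, wd (d:=n.+1) i = lift ord_max i.
  by move=> i; apply: val_inj; exact: (esym (lift_max i)).
have wdw : forall i : 'I_n, widen_ord (leqnSn n) i = lift ord_max i.
  by move=> i; apply: val_inj; exact: (esym (lift_max i)).
pose c := cmat gamma mu.
pose b i := bvec beta B mu i 0.
pose w i k := gamma i k * mu i * mu k.
have F1 : forall i k, c i k = c k i.
  move=> i k; rewrite !mxE eq_sym; case: eqP => [->|_] //.
  by rewrite gs; congr (- _); ring.
have F2 : forall i (y : 'I_n.+1 -> R), \sum_k c i k * y k = \sum_k w i k * (y i - y k).
  move=> i y; rewrite (bigD1 i) //= [RHS](bigD1 i) //= subrr mulr0 add0r mxE eqxx.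
  rewrite mulr_suml -big_split /=; apply: eq_bigr => k hk.
  by rewrite mxE eq_sym (negbTE hk) /w; ring.
suff sub : ((bt mu)^T <= (C mu)^T)%MS.
  by apply: trmx_inj; rewrite trmx_mul trmxK (mulmxKpV sub).
rewrite submxE; apply/eqP; apply/matrixP => a j.
have hK := mulmx_coker (C mu)^T.
pose x i := cokermx (C mu)^T i j.
pose y k := if unlift ord_max k is Some k' then x k' else 0.
have yl : forall i, y (lift ord_max i) = x i by move=> i; rewrite /y liftK.
have ym : y ord_max = 0 by rewrite /y unlift_none.
have split_sum : forall F : 'I_n.+1 -> R, F ord_max = 0 ->
    \sum_k F k = \sum_(k < n) F (lift ord_max k).
  by move=> F hF; rewrite big_ord_recr /= hF addr0; apply: eq_bigr => k _; rewrite wdw.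
have hx : forall i : 'I_n, \sum_k c (lift ord_max i) k * y k = 0.
  move=> i; rewrite split_sum ?ym ?mulr0 //.
  have := congr1 (fun M : 'M[R]_n => M i j) hK; rewrite !mxE => h0; rewrite -[RHS]h0.
  apply: eq_bigr => k _; rewrite yl; congr (_ * _); rewrite F1 -!wdl /c !mxE //.
have hq : \sum_i y i * \sum_k w i k * (y i - y k) = 0.
  rewrite split_sum ?ym ?mul0r //; apply: big1 => i _.
  by rewrite -F2 hx mulr0.
have wge : forall i k, 0 <= w i k.
  move=> i k; rewrite /w; apply: mulr_ge0; last exact: mu0.
  apply: mulr_ge0; last exact: mu0.
  by case: (eqVneq i k) => [->|/hpos/ltW //]; rewrite hdiag.
have ws : forall i k, w i k = w k i by move=> i k; rewrite /w gs; ring.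
have hk := @key _ _ w y ws wge hq.
have yeq : forall i k, 0 < mu i -> 0 < mu k -> y i = y k.
  move=> i k hi hk'; case: (eqVneq i k) => [->//|ne].
  have := hk i k; rewrite /w; move/eqP; rewrite mulf_eq0 sqrf_eq0 subr_eq0 !mulf_eq0.
  by rewrite (gt_eqF (hpos _ _ ne)) (gt_eqF hi) (gt_eqF hk') => /eqP.
have -> : ((bt mu)^T *m cokermx (C mu)^T) a j = \sum_k b k * y k.
  rewrite mxE split_sum ?ym ?mulr0 //; apply: eq_bigr => k _.
  by rewrite yl /x /bt /b !mxE wdl.
rewrite mxE.
case: (boolP [exists p, 0 < mu p]) => [/existsP [p hp]|/existsPn hn]; last first.
  have : \sum_(i < n.+1) mu i = 0.
    by apply: big1 => p _; apply/eqP; rewrite eq_le mu0 andbT leNgt hn.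
  by rewrite mu1 => /eqP; rewrite oner_eq0.
have -> : \sum_k b k * y k = (\sum_k b k) * y p.
  rewrite mulr_suml; apply: eq_bigr => k _.
  case: (boolP (0 < mu k)) => hk'; first by rewrite (yeq k p hk' hp).
  have Jk : Jset beta B k.
    by apply: NNPP => nJ; move: hk'; rewrite E2.
  have mk : mu k = 0 by apply/eqP; rewrite eq_le mu0 andbT leNgt.
  by rewrite /b (Jk mu (conj mu0 mu1) mk) !mul0r.
suff -> : \sum_k b k = 0 by rewrite mul0r.
rewrite /b.
under eq_bigr do rewrite mxE.
rewrite big_split /= exchange_big /=.
have -> : \sum_(j0 < n.+1) \sum_(i < n.+1) B i j0 * mu j0 = \sum_(j0 < n.+1) (- \sum_(i < n.+1) beta i 0) * mu j0.
  apply: eq_bigr => k _; rewrite -mulr_suml; congr (_ * _).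
  by apply/eqP; rewrite -addr_eq0 hcol.
by rewrite -mulr_sumr mu1 mulr1 subrr.
Qed.

Theorem mainTheorem16 (R : realFieldType) (d : nat) (hd : (2 <= d)%N)
  (beta : 'cV[R]_d) (B gamma : 'M[R]_d)
  (hsym : gamma^T = gamma)
  (hdiag : forall i, gamma i i = 0)
  (hpos : forall i j, i != j -> 0 < gamma i j)
  (hadm : admissible beta B gamma) :
  exists lam : ('I_d -> R) -> 'cV[R]_(d.-1),
    forall mu, Eset beta B mu ->
      vtilde (bvec beta B mu) = mtilde (cmat gamma mu) *m lam mu.
Proof.
destruct d as [|n]; first by [].
exact: main_n.
Qed.
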